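(* Let $m>2$ be odd and $n>0$ even, with $\gcd(m,n)=1$. A tuple $\mathbf{a}=(a_0,\dots,a_{n-1})\in\mathbf{Z}_m^n$ belongs to $\mathcal{C}_m^n$ if and only if $\sigma(\mathbf{a})=\sum_{i=0}^{n-1}(-1)^ia_i\equiv0\pmod m$.
   Context: $\mathbf{Z}_m$ denotes the integers modulo $m$. $T:\mathbf{Z}_m^n\to\mathbf{Z}_m^n$ is $T(a_0,\dots,a_{n-1})=(a_0+a_1,a_1+a_2,\dots,a_{n-1}+a_0)$. $\mathcal{C}_m^n$ is the set of tuples lying in a cycle of some sequence $(T^k\mathbf{b})_{k\ge0}$, i.e. the set of $\mathbf{a}\in\mathbf{Z}_m^n$ such that $T^P\mathbf{a}=\mathbf{a}$ for some positive integer $P$. *)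

(* Defs.v *)
From mathcomp Require Import all_boot all_order all_algebra.
Set Implicit Arguments. Unset Strict Implicit. Unset Printing Implicit Defensive.
Import GRing.Theory.
Local Open Scope ring_scope.

Definition csucc (n : nat) (i : 'I_n) : 'I_n :=
  match n return 'I_n -> 'I_n with
  | 0 => fun i => i
  | k.+1 => fun i => ordS i
  end i.

Definition Tmap (m n : nat) (a : {ffun 'I_n -> 'Z_m}) : {ffun 'I_n -> 'Z_m} :=
  [ffun i => a i + a (csucc i)].

(* C_m^n : tuples lying on a cycle, i.e. T^P a = a for some P > 0 *)
Definition in_cycle (m n : nat) (a : {ffun 'I_n -> 'Z_m}) : Prop :=
  exists P : nat, (0 < P)%N /\ iter P (@Tmap m n) a = a.

Definition alt_sum (m n : nat) (a : {ffun 'I_n -> 'Z_m}) : 'Z_m :=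
  \sum_(i < n) (-1) ^+ i * a i.

(* Main.v *)
Require Import Defs.
From mathcomp Require Import all_boot all_order all_algebra.
Import GRing.Theory.
Local Open Scope ring_scope.

Lemma mulrn_Zp_eq0 (m n : nat) (c : 'Z_m) :
  (1 < m)%N -> coprime m n -> c *+ n = 0 -> c = 0.
Proof.
move=> m1 cop H; apply/val_inj => /=.
have := congr1 val H; rewrite Zp_mulrn /=.
have := ltn_ord c; set k := nat_of_ord c; clearbody k.
rewrite Zp_cast // => hc.
move/eqP; rewrite -/(dvdn _ _) Gauss_dvdl // => /dvdn_leq.
by case: k hc => // k lt /(_ isT); rewrite leqNgt lt.
Qed.

Lemma ordS_widen k (i : 'I_k) : ordS (widen_ord (leqnSn k) i) = lift ord0 i.
Proof. by apply/val_inj => /=; rewrite modn_small // ltnS. Qed.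

Lemma ordS_max k : ordS (@ord_max k) = ord0.
Proof. by apply/val_inj => /=; rewrite modnn. Qed.

Lemma alt_sum_T m k (a : {ffun 'I_k.+1 -> 'Z_m}) : odd k -> alt_sum (Tmap a) = 0.
Proof.
move=> hk; rewrite /alt_sum.
under eq_bigr do rewrite ffunE mulrDr.
rewrite big_split /= [X in X + _]big_ord_recl [X in _ + X]big_ord_recr /= ordS_max.
under [X in _ + (X + _) = _]eq_bigr do rewrite ordS_widen.
rewrite -[(-1) ^+ k]signr_odd hk expr1.
under eq_bigr do rewrite /bump leq0n add1n exprS mulN1r mulNr.
rewrite sumrN expr0 mul1r mulN1r.
by rewrite addrA subrK subrr.
Qed.

From mathcomp Require Import ring.

Lemma T_inj m k (a b : {ffun 'I_k.+1 -> 'Z_m}) : (1 < m)%N -> coprime m k.+1 ->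
  Tmap a = Tmap b -> alt_sum a = alt_sum b -> a = b.
Proof.
move=> m1 cop HT Hs.
pose c i := a i - b i.
have hc : forall i, c (ordS i) = - c i.
  move=> i; have := congr1 (fun f : {ffun _ -> _} => f i) HT; rewrite !ffunE /= => H.
  have e : a (ordS i) = - a i + (b i + b (ordS i)) by rewrite -H addKr.
  by rewrite /c e; ring.
have hj : forall j, (j < k.+1)%N -> c (inord j) = (-1) ^+ j * c ord0.
  elim=> [|j IH] hj.
    by rewrite expr0 mul1r; congr c; apply/val_inj; rewrite /= inordK.
  have -> : (inord j.+1 : 'I_k.+1) = ordS (inord j).
    by apply/val_inj; rewrite /= !inordK ?modn_small // ltnW.
  by rewrite hc IH ?(ltnW hj) // exprS mulN1r mulNr.
have hi : forall i : 'I_k.+1, c i = (-1) ^+ i * c ord0.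
  by move=> i; rewrite -hj ?inord_val.
have h0 : c ord0 *+ k.+1 = 0.
  have : alt_sum a - alt_sum b = 0 by rewrite Hs subrr.
  rewrite /alt_sum -sumrB.
  have sq : forall i : nat, ((-1) ^+ i * (-1) ^+ i : 'Z_m) = 1.
    by move=> i; rewrite -signr_odd; case: (odd i); rewrite ?expr0 ?expr1 ?mul1r ?mulN1r ?opprK.
  under eq_bigr do rewrite -mulrBr -/(c _) hi mulrA sq mul1r.
  by rewrite sumr_const card_ord.
have c0 := @mulrn_Zp_eq0 m k.+1 (c ord0) m1 cop h0.
apply/ffunP=> i; apply/eqP; rewrite -subr_eq0; apply/eqP.
by have := hi i; rewrite c0 mulr0.
Qed.

Lemma iter_K m k (a : {ffun 'I_k.+1 -> 'Z_m}) i : odd k -> alt_sum a = 0 ->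
  alt_sum (iter i (@Tmap m k.+1) a) = 0.
Proof. by move=> hk Ha; case: i => //= i; rewrite alt_sum_T. Qed.

Lemma iter_cancel m k (a : {ffun 'I_k.+1 -> 'Z_m}) : (1 < m)%N -> coprime m k.+1 ->
  odd k -> alt_sum a = 0 -> forall i d,
  iter i (@Tmap m k.+1) a = iter (i + d) (@Tmap m k.+1) a -> a = iter d (@Tmap m k.+1) a.
Proof.
move=> m1 cop hk Ha; elim=> [|i IH] d //= H.
apply: IH; apply: T_inj => //.
by rewrite !iter_K.
Qed.

Theorem proposition6p2 (m n : nat) :
  (2 < m)%N -> odd m -> (0 < n)%N -> ~~ odd n -> coprime m n ->
  forall a : {ffun 'I_n -> 'Z_m}, in_cycle a <-> alt_sum a = 0.
Proof.
move=> m2 _; case: n => // k _ /= hk cop a; have m1 : (1 < m)%N by apply: ltnW.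
rewrite negbK in hk.
split.
  by case=> [[|P] [//= _ <-]]; rewrite alt_sum_T.
move=> Ha.
pose K := [set b : {ffun 'I_k.+1 -> 'Z_m} | alt_sum b == 0].
pose f := fun i : 'I_#|K|.+1 => iter i (@Tmap m k.+1) a.
case: (boolP (injectiveb f)) => [/injectiveP inj|/injectivePn [x [y nxy fxy]]].
  have : (#|codom f| <= #|K|)%N.
    apply: subset_leq_card; apply/subsetP => b /codomP [i ->].
    by rewrite inE /f iter_K.
  by rewrite card_codom // card_ord ltnn.
wlog lxy : x y nxy fxy / (x < y)%N.
  move=> W; case: (ltngtP x y) => [l|l|/val_inj e]; first exact: (W x y).
  - by apply: (W y x) => //; rewrite eq_sym.
  - by rewrite e eqxx in nxy.
exists (y - x)%N; split; first by rewrite subn_gt0.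
symmetry; apply: (@iter_cancel _ _ _ m1 cop hk Ha x).
by rewrite subnKC ?(ltnW lxy).
Qed.
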